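(* Let $G$ be a graph with $\lambda_3(G)=k\ge 2$ and let $S=\{x,y,z\}\subseteq V(G)$ be a set of three distinct vertices. Then there exist $k$ pairwise edge-disjoint $S$-trees $T_1,\dots,T_k$ in $G$ such that $E(T_i)\cap E(G[S])=\emptyset$ for all $i\ge 3$ (i.e., at least $k-2$ of them use no edge of the induced subgraph $G[S]$).
   Context: For a graph $G$ and $S\subseteq V(G)$ with $|S|\ge 2$, an $S$-tree is a subgraph of $G$ that is a tree containing all vertices of $S$; $\lambda(S)$ is the maximum number of pairwise edge-disjoint $S$-trees, and $\lambda_3(G)=\min\{\lambda(S): |S|=3\}$. $G[S]$ denotes the subgraph induced by $S$. *)

(* Defs.v *)
(* Finite simple graph G on vertex type T given by a
   symmetric irreflexive adjacency relation e : rel T. *)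
From mathcomp Require Import all_boot.
Set Implicit Arguments. Unset Strict Implicit. Unset Printing Implicit Defensive.

Section Graphs.
Variable T : finType.

Definition edges (e : rel T) : {set {set T}} :=
  [set f : {set T} | [exists u : T, exists v : T, e u v && (f == [set u; v])]].

Definition adjF (F : {set {set T}}) : rel T := fun u v => [set u; v] \in F.

Definition vertsF (F : {set {set T}}) : {set T} := \bigcup_(f in F) f.

Definition connectedF (F : {set {set T}}) : Prop :=
  forall u v, u \in vertsF F -> v \in vertsF F -> connect (adjF F) u v.

Definition acyclicF (F : {set {set T}}) : Prop :=
  forall c : seq T, uniq c -> 3 <= size c -> ~~ cycle (adjF F) c.

Definition is_Stree (e : rel T) (S : {set T}) (F : {set {set T}}) : Prop :=
  [/\ F \subset edges e, S \subset vertsF F, connectedF F & acyclicF F].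

Definition packing (e : rel T) (S : {set T}) (n : nat) : Prop :=
  exists Ts : 'I_n -> {set {set T}},
    (forall i, is_Stree e S (Ts i)) /\
    (forall i j, i != j -> [disjoint Ts i & Ts j]).

Definition lambda_eq (e : rel T) (S : {set T}) (n : nat) : Prop :=
  packing e S n /\ (forall m, packing e S m -> m <= n).

Definition lambda3_eq (e : rel T) (k : nat) : Prop :=
  (forall S : {set T}, #|S| = 3 -> exists n, lambda_eq e S n /\ k <= n) /\
  (exists S : {set T}, #|S| = 3 /\ lambda_eq e S k).

Definition induced_edges (e : rel T) (S : {set T}) : {set {set T}} :=
  [set f in edges e | f \subset S].

End Graphs.

(* Main.v *)
Require Import Defs.
From mathcomp Require Import all_boot zify.
From Stdlib Require Import Classical.
Set Implicit Arguments. Unset Strict Implicit. Unset Printing Implicit Defensive.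


Section G.
Variable T : finType.
Implicit Types (F G : {set {set T}}) (u v w a b : T).

Lemma adjF_sym F : symmetric (adjF F).
Proof. by move=> u v; rewrite /adjF setUC. Qed.

Lemma reach_sym F u v : connect (adjF F) u v -> connect (adjF F) v u.
Proof. by rewrite (sym_connect_sym (@adjF_sym F)). Qed.

Lemma reach_mono F G u v : F \subset G -> connect (adjF F) u v -> connect (adjF G) u v.
Proof.
move=> sFG; apply: connect_sub => a b hab; apply: connect1.
by rewrite /adjF (subsetP sFG).
Qed.

Lemma vertsP F w : reflect (exists2 f, f \in F & w \in f) (w \in vertsF F).
Proof.
rewrite /vertsF; apply: (iffP bigcupP) => [[f ? ?]|[f ? ?]]; by exists f.
Qed.

Lemma verts_mono F G w : F \subset G -> w \in vertsF F -> w \in vertsF G.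
Proof. by move=> sFG /vertsP[f fF wf]; apply/vertsP; exists f => //; rewrite (subsetP sFG). Qed.

Lemma vertsU F G w : (w \in vertsF (F :|: G)) = (w \in vertsF F) || (w \in vertsF G).
Proof.
apply/vertsP/orP => [[f]|[]/vertsP[f fF wf]]; last 2 first.
- by exists f => //; rewrite in_setU fF.
- by exists f => //; rewrite in_setU fF orbT.
by rewrite in_setU => /orP[] fF wf; [left|right]; apply/vertsP; exists f.
Qed.

Lemma reach_verts F u v : u != v -> connect (adjF F) u v -> u \in vertsF F.
Proof.
move=> nuv /connectP[[|w p] /= hp hl]; first by rewrite hl eqxx in nuv.
move: hp => /andP[huw _]; apply/vertsP; exists [set u; w] => //.
by rewrite in_set2 eqxx.
Qed.

Lemma reach_verts2 F u v : u != v -> connect (adjF F) u v ->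
  u \in vertsF F /\ v \in vertsF F.
Proof.
move=> nuv h; split; first exact: reach_verts h.
by apply: (@reach_verts F v u); [rewrite eq_sym|apply: reach_sym].
Qed.

Lemma remove_edge F a b u p : path (adjF F) u p -> last u p \in [set a; b] ->
  connect (adjF (F :\ [set a; b])) u a \/ connect (adjF (F :\ [set a; b])) u b.
Proof.
elim: p u => [|v p IH] u /=.
  by move=> _ /set2P[->|->]; [left|right]; apply: connect0.
move=> /andP[huv hp] hl; have [IHa|IHb] := IH v hp hl.
- case: (eqVneq [set u; v] [set a; b]) => E.
  + have : u \in [set a; b] by rewrite -E in_set2 eqxx.
    by move/set2P=> [->|->]; [left|right]; apply: connect0.
  + left; apply: connect_trans IHa; apply: connect1.
    by rewrite /adjF in_setD1 E /=; exact: huv.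
- case: (eqVneq [set u; v] [set a; b]) => E.
  + have : u \in [set a; b] by rewrite -E in_set2 eqxx.
    by move/set2P=> [->|->]; [left|right]; apply: connect0.
  + right; apply: connect_trans IHb; apply: connect1.
    by rewrite /adjF in_setD1 E /=; exact: huv.
Qed.

Lemma remove_edge_conn F a b w : connectedF F -> a \in vertsF F -> w \in vertsF F ->
  connect (adjF (F :\ [set a; b])) w a \/ connect (adjF (F :\ [set a; b])) w b.
Proof.
move=> cF aF wF; have /connectP[p hp hl] := cF w a wF aF.
by apply: (remove_edge hp); rewrite -hl in_set2 eqxx.
Qed.

End G.


Section G2.
Variable T : finType.
Implicit Types (F G : {set {set T}}) (u v w a b : T).

Lemma set_neq (A B : {set T}) w : w \in A -> w \notin B -> A != B.
Proof. by move=> wA wB; apply/eqP => E; rewrite -E wA in wB. Qed.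

Lemma good_tree (e : rel T) (S : {set T}) F : F \subset edges e -> S \subset vertsF F ->
  connectedF F -> exists2 F' : {set {set T}}, F' \subset F & is_Stree e S F'.
Proof.
move: (ltnSn #|F|); move: {2}#|F|.+1 => n.
elim: n F => [|n IH] F // hFn hE hS hC.
have [hA|nA] := classic (acyclicF F).
  by exists F => //; split.
have [c [uc sc cc]] : exists c, [/\ uniq c, 3 <= size c & cycle (adjF F) c].
  apply: NNPP => H; apply: nA => c uc sc; apply/negP => cc; apply: H; by exists c; split.
case: c uc sc cc => [|a [|b [|d s]]] //= uc _.
rewrite rcons_path => /and3P[hab hbd /andP[hp hla]].
move: uc; rewrite !inE !negb_or => /andP[/and3P[nab nad nas] /andP[/andP[nbd nbs] /andP[nds us]]].
set l := last d s in hla.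
have lds : l \in d :: s by exact: mem_last.
have nla : l != a by apply/eqP => E; move: lds; rewrite E inE (negbTE nas) (negbTE nad).
have nlb : l != b by apply/eqP => E; move: lds; rewrite E inE (negbTE nbs) (negbTE nbd).
set f := [set a; b].
set F0 := F :\ f.
have sF0 : F0 \subset F by exact: subD1set.
have nbdf : [set b; d] != f.
  by apply: (@set_neq _ _ d); rewrite !inE ?eqxx ?orbT // negb_or eq_sym nad eq_sym nbd.
have nlaf : [set l; a] != f.
  by apply: (@set_neq _ _ l); rewrite !inE ?eqxx ?orbT // negb_or nla nlb.
have hbd0 : [set b; d] \in F0 by rewrite in_setD1 nbdf.
have hla0 : [set l; a] \in F0 by rewrite in_setD1 nlaf.
have hV : forall w, w \in vertsF F -> w \in vertsF F0.
  move=> w /vertsP[g gF wg]; case: (eqVneq g f) => E.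
    move: wg; rewrite E => /set2P[->|->]; apply/vertsP.
    - by exists [set l; a]; rewrite // !inE eqxx orbT.
    - by exists [set b; d]; rewrite // !inE eqxx.
  by apply/vertsP; exists g; rewrite // in_setD1 E.
have hba : connect (adjF F0) b a.
  apply: (@connect_trans _ _ d); first by apply: connect1.
  apply: (@connect_trans _ _ l); last by apply: connect1.
  apply/connectP; exists s => //.
  apply: (@sub_in_path _ [pred w | w \notin f] (adjF F)) => //.
  - move=> u v uP vP; rewrite /adjF in_setD1 => ->; rewrite andbT.
    by apply: (@set_neq _ _ u); [rewrite !inE eqxx | exact: uP].
  - apply/allP => w; rewrite inE => /orP[/eqP->|ws]; rewrite !inE negb_or.
      by rewrite eq_sym nad eq_sym nbd.
    by apply/andP; split; [apply: (contraNneq _ nas) | apply: (contraNneq _ nbs)] => <-.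
have hab0 : connect (adjF F0) a b by exact: reach_sym.
have hC0 : connectedF F0.
  move=> u v uF vF; have := hC u v (verts_mono sF0 uF) (verts_mono sF0 vF).
  apply: connect_sub => p q hpq; case: (eqVneq [set p; q] f) => E.
    have pf : p \in f by rewrite -E !inE eqxx.
    have qf : q \in f by rewrite -E !inE eqxx orbT.
    move: pf qf => /set2P[->|->] /set2P[->|->] //; exact: connect0.
  by apply: connect1; rewrite /adjF in_setD1 E.
have hn : #|F0| < n.
  move: hFn; rewrite (cardsD1 f F); move: hab; rewrite /adjF => -> /=; rewrite add1n ltnS => H; exact H.
have [F' sF' tF'] := IH F0 hn (subset_trans sF0 hE)
  (subset_trans hS (introT subsetP hV)) hC0.
by exists F' => //; apply: subset_trans sF0.
Qed.

End G2.


Lemma mk_disj (T : finType) (A B : {set T}) :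
  (forall f, f \in A -> f \in B -> False) -> [disjoint A & B].
Proof.
move=> H; rewrite -setI_eq0; apply/eqP/setP => f; rewrite inE in_set0.
by apply/negP => /andP[]; exact: H.
Qed.

Lemma tri (T : finType) (e : rel T) (e_irr : irreflexive e) x y z f :
  f \in induced_edges e [set x; y; z] ->
  [\/ f = [set x; y], f = [set y; z] | f = [set x; z]].
Proof.
rewrite inE => /andP[]; rewrite inE => /existsP[u /existsP[v /andP[huv /eqP ->]]] sub.
have uS : u \in [set x; y; z] by apply: (subsetP sub); rewrite !inE eqxx.
have vS : v \in [set x; y; z] by apply: (subsetP sub); rewrite !inE eqxx orbT.
have nuv : u != v by apply/eqP => E; rewrite E e_irr in huv.
move: uS vS nuv; rewrite !inE => /orP[/orP[/eqP->|/eqP->]|/eqP->] /orP[/orP[/eqP->|/eqP->]|/eqP->]; rewrite ?eqxx //= => _;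
  first [by constructor 1 | by constructor 2 | by constructor 3
        | by constructor 1; rewrite setUC | by constructor 2; rewrite setUC
        | by constructor 3; rewrite setUC].
Qed.

Lemma mk_tree (T : finType) (e : rel T) x y z (F : {set {set T}}) :
  x != y -> x != z -> F \subset edges e ->
  connect (adjF F) y x -> connect (adjF F) z x ->
  (forall w, w \in vertsF F ->
     [\/ connect (adjF F) w x, connect (adjF F) w y | connect (adjF F) w z]) ->
  exists2 F' : {set {set T}}, F' \subset F & is_Stree e [set x; y; z] F'.
Proof.
move=> nxy nxz hE hy hz hub.
have hyx := reach_verts2 (F := F) (u := y) (v := x) _ hy.
have hzx := reach_verts2 (F := F) (u := z) (v := x) _ hz.
rewrite eq_sym in nxy; rewrite eq_sym in nxz.
have [yV xV] := hyx nxy; have [zV _] := hzx nxz.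
have hx : forall w, w \in vertsF F -> connect (adjF F) w x.
  move=> w /hub[//|h|h]; apply: connect_trans h _ => //.
apply: good_tree => //.
  by apply/subsetP => w; rewrite !inE => /orP[/orP[/eqP->|/eqP->]|/eqP->].
move=> u v uV vV; apply: connect_trans (hx u uV) _; exact: reach_sym (hx v vV).
Qed.

Lemma replace (T : finType) (e : rel T) (S : {set T}) k
  (Ts : 'I_k -> {set {set T}}) (I : {set {set T}}) (j1 j2 j3 : 'I_k) (A0 B0 C0 : {set {set T}}) :
  (forall i j, i != j -> [disjoint Ts i & Ts j]) ->
  j1 != j2 -> j1 != j3 -> j2 != j3 ->
  (forall i, is_Stree e S (Ts i)) ->
  (exists2 A : {set {set T}}, A \subset A0 & is_Stree e S A) ->
  (exists2 B : {set {set T}}, B \subset B0 & is_Stree e S B) ->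
  (exists2 C : {set {set T}}, C \subset C0 & is_Stree e S C) ->
  [disjoint A0 & B0] -> [disjoint A0 & C0] -> [disjoint B0 & C0] ->
  A0 \subset Ts j1 :|: Ts j2 :|: Ts j3 -> B0 \subset Ts j1 :|: Ts j2 :|: Ts j3 ->
  C0 \subset Ts j1 :|: Ts j2 :|: Ts j3 ->
  C0 :&: I = set0 ->
  (forall i, i != j1 -> i != j2 -> i != j3 -> Ts i :&: I = set0) ->
  exists Ts' : 'I_k -> {set {set T}},
    [/\ (forall i, is_Stree e S (Ts' i)),
        (forall i j, i != j -> [disjoint Ts' i & Ts' j]) &
        #|[set i | Ts' i :&: I != set0]| <= 2].
Proof.
move=> hD n12 n13 n23 hT [A sA tA] [B sB tB] [C sC tC] dAB dAC dBC uA uB uC fC hO.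
set U := Ts j1 :|: Ts j2 :|: Ts j3 in uA uB uC.
have dO : forall i, i != j1 -> i != j2 -> i != j3 -> [disjoint Ts i & U].
  move=> i a1 a2 a3; apply: mk_disj => f fi; rewrite !inE => /orP[/orP[]|] fj.
  - by rewrite (disjointFr (hD _ _ a1) fi) in fj.
  - by rewrite (disjointFr (hD _ _ a2) fi) in fj.
  - by rewrite (disjointFr (hD _ _ a3) fi) in fj.
have cases : forall i, [\/ i = j1, i = j2, i = j3 | [/\ i != j1, i != j2 & i != j3]].
  move=> i; case: (eqVneq i j1) => [->|a1]; first by constructor 1.
  case: (eqVneq i j2) => [->|a2]; first by constructor 2.
  case: (eqVneq i j3) => [->|a3]; first by constructor 3.
  by constructor 4.
move: (subset_trans sA uA) (subset_trans sB uB) (subset_trans sC uC) => {}uA {}uB {}uC.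
move: (disjointW sA sB dAB) (disjointW sA sC dAC) (disjointW sB sC dBC) => {}dAB {}dAC {}dBC.
have h21 : (j2 == j1) = false by rewrite eq_sym (negbTE n12).
have h31 : (j3 == j1) = false by rewrite eq_sym (negbTE n13).
have h32 : (j3 == j2) = false by rewrite eq_sym (negbTE n23).
exists (fun i => if i == j1 then A else if i == j2 then B else if i == j3 then C else Ts i).
split.
- move=> i; case: (cases i) => [->|->|->|[a1 a2 a3]];
    by rewrite ?eqxx ?h21 ?h31 ?h32 ?(negbTE a1) ?(negbTE a2) ?(negbTE a3).
- move=> i j nij; case: (cases i) => [Ei|Ei|Ei|[a1 a2 a3]]; case: (cases j) => [Ej|Ej|Ej|[b1 b2 b3]];
    rewrite ?Ei ?Ej ?eqxx ?h21 ?h31 ?h32 ?(negbTE a1) ?(negbTE a2) ?(negbTE a3)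
            ?(negbTE b1) ?(negbTE b2) ?(negbTE b3);
    try (by move: nij; rewrite ?Ei ?Ej eqxx);
    try (by rewrite disjoint_sym);
    try done.
  all: try first [ by apply: (disjointWl uA); rewrite disjoint_sym; apply: dO
             | by apply: (disjointWl uB); rewrite disjoint_sym; apply: dO
             | by apply: (disjointWl uC); rewrite disjoint_sym; apply: dO
             | by apply: (disjointWr uA); apply: dO
             | by apply: (disjointWr uB); apply: dO
             | by apply: (disjointWr uC); apply: dO
             | by apply: hD ].
- apply: (@leq_trans #|[set j1; j2]|); last by rewrite cards2; case: (_ != _).
  apply: subset_leq_card; apply/subsetP => i; rewrite !inE.
  case: (cases i) => [->|->|->|[a1 a2 a3]]; rewrite ?eqxx ?h21 ?h31 ?h32 ?orbT //.
  + have : C :&: I = set0.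
      by apply/eqP; rewrite -subset0 -fC; apply: setSI.
    by move=> ->; rewrite eqxx.
  + by rewrite (negbTE a1) (negbTE a2) (negbTE a3) hO // eqxx.
Qed.


Lemma hub_small (T : finType) x y z (F : {set {set T}}) w :
  (forall f, f \in F -> f \subset [set x; y; z]) -> w \in vertsF F ->
  [\/ connect (adjF F) w x, connect (adjF F) w y | connect (adjF F) w z].
Proof.
move=> H /vertsP[f fF wf]; move: (subsetP (H f fF) w wf).
by rewrite !inE => /orP[/orP[]|]/eqP->; [constructor 1|constructor 2|constructor 3]; exact: connect0.
Qed.

Lemma inS_hub (T : finType) x y z (G : {set {set T}}) w : w \in [set x; y; z] ->
  [\/ connect (adjF G) w x, connect (adjF G) w y | connect (adjF G) w z].
Proof.
by rewrite !inE => /orP[/orP[]|]/eqP->; [constructor 1|constructor 2|constructor 3]; exact: connect0.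
Qed.

Lemma sub3 (T : finType) (x y z a b : T) : a \in [set x; y; z] -> b \in [set x; y; z] ->
  [set a; b] \subset [set x; y; z].
Proof. by move=> ha hb; apply/subsetP => u /set2P[->|->]. Qed.

Lemma free_set (T : finType) (C I : {set T}) : (forall f, f \in C -> f \in I -> False) -> C :&: I = set0.
Proof. by move=> H; apply/eqP; rewrite setI_eq0; apply: mk_disj. Qed.

Lemma improve (T : finType) (e : rel T) (e_irr : irreflexive e) (x y z : T)
  (hxy : x != y) (hxz : x != z) (hyz : y != z) k (Ts : 'I_k -> {set {set T}}) :
  (forall i, is_Stree e [set x; y; z] (Ts i)) ->
  (forall i j, i != j -> [disjoint Ts i & Ts j]) ->
  exists Ts' : 'I_k -> {set {set T}},
    [/\ (forall i, is_Stree e [set x; y; z] (Ts' i)),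
        (forall i j, i != j -> [disjoint Ts' i & Ts' j]) &
        #|[set i | Ts' i :&: induced_edges e [set x; y; z] != set0]| <= 2].
Proof.
move=> hT hD.
set S := [set x; y; z]. set I := induced_edges e S.
have HD : forall f i j, f \in Ts i -> f \in Ts j -> i = j.
  move=> f i j fi fj; apply/eqP; apply: contraT => nij.
  by rewrite (disjointFr (hD _ _ nij) fi) in fj.
set exy := [set x; y]. set eyz := [set y; z]. set exz := [set x; z].
pose O f := [set i | f \in Ts i].
have O1 : forall f, #|O f| <= 1.
  by move=> f; apply/card_le1_eqP => i j; rewrite !inE => fi fj; first [exact: HD fi fj | exact: HD fj fi].
set D := [set i | Ts i :&: I != set0].
have Dsub : D \subset O exy :|: O eyz :|: O exz.
  apply/subsetP => i; rewrite !inE => /set0Pn[f]; rewrite inE => /andP[fi].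
  by move/(tri e_irr) => [E|E|E]; subst f; rewrite /exy /eyz /exz fi ?orbT.
case: (leqP #|D| 2) => hD2; first by exists Ts.
have hU : forall A B : {set 'I_k}, #|A :|: B| <= #|A| + #|B|.
  by move=> A B; rewrite cardsU leq_subr.
have card3 : 3 <= #|O exy| + #|O eyz| + #|O exz|.
  apply: leq_trans hD2 _; apply: leq_trans (subset_leq_card Dsub) _.
  apply: leq_trans (hU _ _) _; rewrite leq_add2r; exact: hU.
have [c1 c2 c3] : [/\ #|O exy| == 1, #|O eyz| == 1 & #|O exz| == 1].
  have := O1 exy; have := O1 eyz; have := O1 exz; move: card3.
  move: #|O exy| #|O eyz| #|O exz| => a b c ? ? ? ?; split; apply/eqP; lia.
move: c1 c2 c3 => /cards1P[j1 E1] /cards1P[j2 E2] /cards1P[j3 E3].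
rewrite E1 E2 E3 in Dsub.
have h1 : exy \in Ts j1.
  have : j1 \in O exy by rewrite E1 set11.
  by rewrite inE.
have h2 : eyz \in Ts j2.
  have : j2 \in O eyz by rewrite E2 set11.
  by rewrite inE.
have h3 : exz \in Ts j3.
  have : j3 \in O exz by rewrite E3 set11.
  by rewrite inE.
have c2' : forall a b : 'I_k, #|[set a] :|: [set b]| <= 2.
  by move=> a b; apply: leq_trans (hU _ _) _; rewrite !cards1.
have n12 : j1 != j2.
  apply/eqP => E; move: Dsub; rewrite E setUid => /subset_leq_card h.
  by have := leq_trans h (c2' _ _); rewrite leqNgt hD2.
have n13 : j1 != j3.
  apply/eqP => E; move: Dsub; rewrite E setUAC setUid => /subset_leq_card h.
  by have := leq_trans h (c2' _ _); rewrite leqNgt hD2.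
have n23 : j2 != j3.
  apply/eqP => E; move: Dsub; rewrite E -setUA setUid => /subset_leq_card h.
  by have := leq_trans h (c2' _ _); rewrite leqNgt hD2.
have hO : forall i, i != j1 -> i != j2 -> i != j3 -> Ts i :&: I = set0.
  move=> i a1 a2 a3; apply/eqP/negPn/negP => hi.
  have : i \in D by rewrite inE.
  by move/(subsetP Dsub); rewrite !inE (negbTE a1) (negbTE a2) (negbTE a3).
have nT : forall f i j, i != j -> f \in Ts i -> f \in Ts j -> False.
  by move=> f i j nij fi fj; rewrite (HD _ _ _ fi fj) eqxx in nij.
have [eT1 SV1 cT1 _] := hT j1.
have [eT2 SV2 cT2 _] := hT j2.
have [eT3 SV3 cT3 _] := hT j3.
have xS : x \in S by rewrite !inE eqxx.
have yS : y \in S by rewrite !inE eqxx orbT.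
have zS : z \in S by rewrite !inE eqxx !orbT.
set U1 := Ts j1 :\ exy. set U2 := Ts j2 :\ eyz. set U3 := Ts j3 :\ exz.
have r1 : forall w, w \in vertsF (Ts j1) -> connect (adjF U1) w x \/ connect (adjF U1) w y.
  by move=> w wV; apply: remove_edge_conn => //; apply: (subsetP SV1).
have r2 : forall w, w \in vertsF (Ts j2) -> connect (adjF U2) w y \/ connect (adjF U2) w z.
  by move=> w wV; apply: remove_edge_conn => //; apply: (subsetP SV2).
have r3 : forall w, w \in vertsF (Ts j3) -> connect (adjF U3) w x \/ connect (adjF U3) w z.
  by move=> w wV; apply: remove_edge_conn => //; apply: (subsetP SV3).
have sU1 : U1 \subset Ts j1 by exact: subD1set.
have sU2 : U2 \subset Ts j2 by exact: subD1set.
have sU3 : U3 \subset Ts j3 by exact: subD1set.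
have v1 := r1 z (subsetP SV1 z zS).
have v2 := r2 x (subsetP SV2 x xS).
have v3 := r3 y (subsetP SV3 y yS).
have d1 : exy != eyz by apply: (@set_neq _ _ _ x); rewrite !inE ?eqxx // negb_or hxy hxz.
have d2 : exy != exz by apply: (@set_neq _ _ _ y); rewrite !inE ?eqxx ?orbT // negb_or eq_sym hxy hyz.
have d3 : eyz != exz by apply: (@set_neq _ _ _ y); rewrite !inE ?eqxx ?orbT // negb_or eq_sym hxy hyz.
have free1 : forall f, f \in U1 -> f \in I -> False.
  move=> f; rewrite in_setD1 => /andP[nf fT] /(tri e_irr)[E|E|E]; subst f.
  - by move: nf; rewrite /exy eqxx.
  - exact: nT _ _ _ n12 fT h2.
  - exact: nT _ _ _ n13 fT h3.
have free2 : forall f, f \in U2 -> f \in I -> False.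
  move=> f; rewrite in_setD1 => /andP[nf fT] /(tri e_irr)[E|E|E]; subst f.
  - exact: nT _ _ _ n12 h1 fT.
  - by move: nf; rewrite /eyz eqxx.
  - exact: nT _ _ _ n23 fT h3.
have free3 : forall f, f \in U3 -> f \in I -> False.
  move=> f; rewrite in_setD1 => /andP[nf fT] /(tri e_irr)[E|E|E]; subst f.
  - exact: nT _ _ _ n13 h1 fT.
  - exact: nT _ _ _ n23 h2 fT.
  - by move: nf; rewrite /exz eqxx.
have hub1 : forall (G : {set {set T}}) w, U1 \subset G -> w \in vertsF U1 ->
    [\/ connect (adjF G) w x, connect (adjF G) w y | connect (adjF G) w z].
  move=> G w sG wV; have [h|h] := r1 w (verts_mono sU1 wV).
  - by constructor 1; apply: reach_mono h.
  - by constructor 2; apply: reach_mono h.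
have hub2 : forall (G : {set {set T}}) w, U2 \subset G -> w \in vertsF U2 ->
    [\/ connect (adjF G) w x, connect (adjF G) w y | connect (adjF G) w z].
  move=> G w sG wV; have [h|h] := r2 w (verts_mono sU2 wV).
  - by constructor 2; apply: reach_mono h.
  - by constructor 3; apply: reach_mono h.
have hub3 : forall (G : {set {set T}}) w, U3 \subset G -> w \in vertsF U3 ->
    [\/ connect (adjF G) w x, connect (adjF G) w y | connect (adjF G) w z].
  move=> G w sG wV; have [h|h] := r3 w (verts_mono sU3 wV).
  - by constructor 1; apply: reach_mono h.
  - by constructor 3; apply: reach_mono h.
have sxy : exy \subset S by apply: sub3.
have syz : eyz \subset S by apply: sub3.
have sxz : exz \subset S by apply: sub3.
set W := Ts j1 :|: Ts j2 :|: Ts j3.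
have W1 : Ts j1 \subset W by apply/subsetP => f fT; rewrite !inE fT ?orbT.
have W2 : Ts j2 \subset W by apply/subsetP => f fT; rewrite !inE fT ?orbT.
have W3 : Ts j3 \subset W by apply/subsetP => f fT; rewrite !inE fT ?orbT.
have xyW : exy \in W by apply: (subsetP W1).
have yzW : eyz \in W by apply: (subsetP W2).
have xzW : exz \in W by apply: (subsetP W3).
have WE : W \subset edges e by rewrite /W !subUset eT1 eT2 eT3.
have e1 : forall (G : {set {set T}}) a b, [set a; b] \in G -> connect (adjF G) a b.
  by move=> G a b h; apply: connect1.
have e2 : forall (G : {set {set T}}) a b, [set a; b] \in G -> connect (adjF G) b a.
  by move=> G a b h; apply: reach_sym; apply: connect1.
have sUW : forall (U : {set {set T}}) j, U \subset Ts j -> Ts j \subset W -> U \subset edges e.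
  by move=> U j h1' h2'; apply: subset_trans WE; apply: subset_trans h2'.
have alpha : connect (adjF (U1 :|: U2)) y x -> connect (adjF (U1 :|: U2)) z x ->
  exists Ts' : 'I_k -> {set {set T}},
    [/\ (forall i, is_Stree e S (Ts' i)),
        (forall i j, i != j -> [disjoint Ts' i & Ts' j]) &
        #|[set i | Ts' i :&: I != set0]| <= 2].
  move=> cy cz.
  apply: (@replace T e S k Ts I j1 j2 j3 [set exy; eyz] (Ts j3) (U1 :|: U2)) => //.
  - apply: mk_tree => //.
    + by apply/subsetP => f /set2P[->|->]; apply: (subsetP WE).
    + by apply: e2; rewrite !inE eqxx.
    + apply: (@connect_trans _ _ y); apply: e2; by rewrite !inE eqxx ?orbT.
    + move=> w; apply: hub_small => f /set2P[->|->] //.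
  - by exists (Ts j3).
  - apply: mk_tree => //.
    + by rewrite subUset (sUW _ _ sU1 W1) (sUW _ _ sU2 W2).
    + move=> w; rewrite vertsU => /orP[]; [apply: hub1 | apply: hub2];
        by rewrite ?subsetUl ?subsetUr.
  - apply: mk_disj => f /set2P[->|->] fT.
    + exact: (nT _ _ _ n13 h1 fT).
    + exact: (nT _ _ _ n23 h2 fT).
  - apply: mk_disj => f /set2P[->|->]; rewrite inE => /orP[]; rewrite in_setD1 => /andP[nf fT].
    + by move: nf; rewrite eqxx.
    + exact: (nT _ _ _ n12 h1 fT).
    + exact: (nT _ _ _ n12 fT h2).
    + by move: nf; rewrite eqxx.
  - apply: mk_disj => f fT; rewrite inE => /orP[]; rewrite in_setD1 => /andP[_ fT'].
    + exact: (nT _ _ _ n13 fT' fT).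
    + exact: (nT _ _ _ n23 fT' fT).
  - by apply/subsetP => f /set2P[->|->].
  - by rewrite subUset (subset_trans sU1 W1) (subset_trans sU2 W2).
  - by apply: free_set => f; rewrite inE => /orP[]; [exact: free1 | exact: free2].
have beta : connect (adjF U1) z x -> connect (adjF U2) x z ->
  exists Ts' : 'I_k -> {set {set T}},
    [/\ (forall i, is_Stree e S (Ts' i)),
        (forall i j, i != j -> [disjoint Ts' i & Ts' j]) &
        #|[set i | Ts' i :&: I != set0]| <= 2].
  move=> cz cx.
  apply: (@replace T e S k Ts I j1 j2 j3 [set eyz; exz] (U2 :|: [set exy]) (U1 :|: U3)) => //.
  - apply: mk_tree => //.
    + by apply/subsetP => f /set2P[->|->]; apply: (subsetP WE).
    + apply: (@connect_trans _ _ z); [apply: e1 | apply: e2]; by rewrite !inE eqxx ?orbT.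
    + by apply: e2; rewrite !inE eqxx ?orbT.
    + move=> w; apply: hub_small => f /set2P[->|->] //.
  - apply: mk_tree => //.
    + rewrite subUset (sUW _ _ sU2 W2) /=; apply/subsetP => f /set1P->.
      exact: (subsetP WE).
    + by apply: e2; rewrite !inE eqxx ?orbT.
    + by apply: reach_sym; apply: reach_mono cx; rewrite subsetUl.
    + move=> w; rewrite vertsU => /orP[]; first by apply: hub2; rewrite subsetUl.
      move=> /vertsP[f /set1P-> wf]; apply: inS_hub; exact: (subsetP sxy).
  - apply: mk_tree => //.
    + by rewrite subUset (sUW _ _ sU1 W1) (sUW _ _ sU3 W3).
    + have czx : connect (adjF (U1 :|: U3)) z x by apply: reach_mono cz; rewrite subsetUl.
      case: v3 => h; first by apply: reach_mono h; rewrite subsetUr.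
      by apply: connect_trans czx; apply: reach_mono h; rewrite subsetUr.
    + by apply: reach_mono cz; rewrite subsetUl.
    + move=> w; rewrite vertsU => /orP[]; [apply: hub1 | apply: hub3];
        by rewrite ?subsetUl ?subsetUr.
  - apply: mk_disj => f /set2P[->|->]; rewrite inE => /orP[].
    + by rewrite in_setD1 => /andP[nf fT]; move: nf; rewrite eqxx.
    + by move/set1P => E; rewrite E eqxx in d1.
    + by rewrite in_setD1 => /andP[nf fT]; exact: (nT _ _ _ n23 fT h3).
    + by move/set1P => E; rewrite E eqxx in d2.
  - apply: mk_disj => f /set2P[->|->]; rewrite inE => /orP[]; rewrite in_setD1 => /andP[nf fT].
    + exact: (nT _ _ _ n12 fT h2).
    + exact: (nT _ _ _ n23 h2 fT).
    + exact: (nT _ _ _ n13 fT h3).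
    + by move: nf; rewrite eqxx.
  - apply: mk_disj => f; rewrite inE => /orP[]; [rewrite in_setD1 => /andP[_ fT] | move/set1P->];
      rewrite inE => /orP[]; rewrite in_setD1 => /andP[nf' fT'].
    + exact: (nT _ _ _ n12 fT' fT).
    + exact: (nT _ _ _ n23 fT fT').
    + by move: nf'; rewrite eqxx.
    + exact: (nT _ _ _ n13 h1 fT').
  - by apply/subsetP => f /set2P[->|->].
  - rewrite subUset (subset_trans sU2 W2) /=; apply/subsetP => f /set1P->; done.
  - by rewrite subUset (subset_trans sU1 W1) (subset_trans sU3 W3).
  - by apply: free_set => f; rewrite inE => /orP[]; [exact: free1 | exact: free3].
case: v1 => h1'; case: v2 => h2'.
- apply: alpha; first by apply: reach_sym; apply: reach_mono h2'; rewrite subsetUr.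
  by apply: reach_mono h1'; rewrite subsetUl.
- exact: beta.
- apply: alpha; first by apply: reach_sym; apply: reach_mono h2'; rewrite subsetUr.
  apply: (@connect_trans _ _ y); first by apply: reach_mono h1'; rewrite subsetUl.
  by apply: reach_sym; apply: reach_mono h2'; rewrite subsetUr.
- apply: alpha.
    apply: (@connect_trans _ _ z).
      by apply: reach_sym; apply: reach_mono h1'; rewrite subsetUl.
    by apply: reach_sym; apply: reach_mono h2'; rewrite subsetUr.
  by apply: reach_sym; apply: reach_mono h2'; rewrite subsetUr.
Qed.


Lemma reindex k (D : {set 'I_k}) : #|D| <= 2 ->
  exists s : 'I_k -> 'I_k, injective s /\ forall i : 'I_k, 2 <= i -> s i \notin D.
Proof.
move=> hD.
set L := enum D ++ enum (~: D).
have sL : size L = k by rewrite size_cat -!cardE cardsC card_ord.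
have uL : uniq L.
  rewrite cat_uniq !enum_uniq /= andbT; apply/hasPn => u.
  by rewrite !mem_enum inE.
exists (fun i => nth i L i); split.
- move=> i j E.
  have hi : i < size L by rewrite sL.
  have hj : j < size L by rewrite sL.
  move: E; rewrite (set_nth_default i _ hj) => /eqP.
  by rewrite (nth_uniq i hi hj uL) => /eqP; apply: val_inj.
- move=> i hi; rewrite nth_cat -cardE.
  have -> : (i < #|D|) = false by apply/negbTE; rewrite -leqNgt; apply: leq_trans hD hi.
  have hm : i - #|D| < size (enum (~: D)).
    rewrite -cardE; have := cardsC D; rewrite card_ord => hc.
    have := ltn_ord i; lia.
  by move: (mem_nth i hm); rewrite mem_enum inE.
Qed.

Lemma card3 (T : finType) (x y z : T) : x != y -> x != z -> y != z -> #|[set x; y; z]| = 3.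
Proof.
move=> hxy hxz hyz.
by rewrite -setUA cardsU1 cards2 hyz !inE negb_or hxy hxz.
Qed.

Theorem proposition2p1 (T : finType) (e : rel T)
  (e_sym : symmetric e) (e_irr : irreflexive e)
  (k : nat) (hk : 2 <= k) (hl : lambda3_eq e k)
  (x y z : T) (hxy : x != y) (hxz : x != z) (hyz : y != z) :
  exists Ts : 'I_k -> {set {set T}},
    [/\ (forall i, is_Stree e [set x; y; z] (Ts i)),
        (forall i j, i != j -> [disjoint Ts i & Ts j]) &
        (forall i : 'I_k, 2 <= i ->
           Ts i :&: induced_edges e [set x; y; z] = set0)].
Proof.
have [hS _] := hl.
have [n [[[Ts0 [hT0 hD0]] _] hkn]] := hS _ (card3 hxy hxz hyz).
pose Ts1 := fun i : 'I_k => Ts0 (widen_ord hkn i).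
have hT1 : forall i, is_Stree e [set x; y; z] (Ts1 i) by move=> i; exact: hT0.
have hD1 : forall i j, i != j -> [disjoint Ts1 i & Ts1 j].
  move=> i j nij; apply: hD0; apply: contra nij => /eqP E.
  by apply/eqP/val_inj; move: E => /(congr1 val).
have [Ts2 [hT2 hD2 hc2]] := improve e_irr hxy hxz hyz hT1 hD1.
have [s [si hs]] := reindex hc2.
exists (fun i => Ts2 (s i)); split.
- by move=> i; exact: hT2.
- move=> i j nij; apply: hD2; apply: contra nij => /eqP E; apply/eqP; exact: si.
- move=> i hi; have := hs i hi; rewrite inE negbK => /eqP; done.
Qed.
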